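(* Let $G$ be a graph that has a compatible tree-representation $\{T(v)\}$. Then $G$ has a simple vertex. Furthermore, any vertex $v$ that maximizes the depth of the root of $T(v)$ (among all vertices of $G$) is a simple vertex.
   Context: Graphs are finite and simple; $N[v]$ denotes the closed neighbourhood of $v$. A host tree $T$ is a rooted tree whose arcs carry positive integer weights; the depth of a node is the sum of arc weights on its path to the root. A subtree is a connected node set of $T$; its root is its node of smallest depth. A tree-representation of $G$ assigns to each vertex $v$ a subtree $T(v)$ of $T$ such that for distinct $v,w$, $(v,w)$ is an edge iff $T(v)\cap T(w)\neq\emptyset$. For subtrees $T_1,T_2$, $T_1$ overshadows $T_2$ if every node of $T_2\setminus T_1$ has depth strictly greater than every node of $T_2\cap T_1$. A tree-representation is compatible if for every two vertices $v,w$, $T(v)$ overshadows $T(w)$ or $T(w)$ overshadows $T(v)$. A vertex $v$ is simple if $N[v]$ can be ordered as $u_1,\dots,u_d$ with $N[u_1]\subseteq\dots\subseteq N[u_d]$. *)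

(* Defs.v *)
From mathcomp Require Import all_boot.
Set Implicit Arguments. Unset Strict Implicit. Unset Printing Implicit Defensive.

Definition simple_graph (V : finType) (e : rel V) : Prop :=
  symmetric e /\ irreflexive e.

Definition cnbhd (V : finType) (e : rel V) (v : V) : {set V} :=
  [set u | (u == v) || e v u].

Definition simple_vertex (V : finType) (e : rel V) (v : V) : Prop :=
  exists s : seq V, perm_eq s (enum (cnbhd e v)) /\
    sorted (fun a b => cnbhd e a \subset cnbhd e b) s.

(** Host tree: finite node type N, root r, parent map par (with par r = r,
    every node reaching r by iterating par), and positive integer weights
    w x on the arc (par x, x) for x <> r. *)
Record host_tree (N : finType) := HostTree {
  ht_root : N;
  ht_par : N -> N;
  ht_w : N -> nat;
  ht_par_root : ht_par ht_root = ht_root;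
  ht_rooted : forall x, iter #|N| ht_par x = ht_root;
  ht_w_pos : forall x, x != ht_root -> 0 < ht_w x
}.

Fixpoint depth_fuel (N : finType) (T : host_tree N) (k : nat) (x : N) : nat :=
  match k with
  | 0 => 0
  | k'.+1 => if x == ht_root T then 0 else ht_w T x + depth_fuel T k' (ht_par T x)
  end.

Definition depth (N : finType) (T : host_tree N) (x : N) : nat :=
  depth_fuel T #|N| x.

Definition tree_adj (N : finType) (T : host_tree N) : rel N :=
  fun x y => ((ht_par T x == y) && (x != ht_root T)) ||
             ((ht_par T y == x) && (y != ht_root T)).

Definition subtree (N : finType) (T : host_tree N) (S : {set N}) : Prop :=
  S != set0 /\
  forall x y, x \in S -> y \in S ->
    connect (fun a b => [&& a \in S, b \in S & tree_adj T a b]) x y.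

Definition is_subroot (N : finType) (T : host_tree N) (S : {set N}) (x : N) : Prop :=
  x \in S /\ forall y, y \in S -> depth T x <= depth T y.

Definition overshadows (N : finType) (T : host_tree N) (T1 T2 : {set N}) : Prop :=
  forall x y, x \in T2 :\: T1 -> y \in T2 :&: T1 -> depth T y < depth T x.

Definition tree_rep (V N : finType) (e : rel V) (T : host_tree N)
    (R : V -> {set N}) : Prop :=
  (forall v, subtree T (R v)) /\
  (forall v w, v != w -> e v w = (R v :&: R w != set0)).

Definition compatible (V N : finType) (T : host_tree N) (R : V -> {set N}) : Prop :=
  forall v w, overshadows T (R v) (R w) \/ overshadows T (R w) (R v).

Definition maximizes_root_depth (V N : finType) (T : host_tree N)
    (R : V -> {set N}) (v : V) : Prop :=
  forall u x y, is_subroot T (R u) x -> is_subroot T (R v) y -> depth T x <= depth T y.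

(* Main.v *)
Require Import Defs.
From mathcomp Require Import all_boot.
Set Implicit Arguments. Unset Strict Implicit. Unset Printing Implicit Defensive.

Lemma fuel_stable (N : finType) (T : host_tree N) k x m :
  iter k (ht_par T) x = ht_root T -> k <= m -> depth_fuel T m x = depth_fuel T k x.
Proof.
elim: k x m => [|k IH] x m /=.
  move=> -> _; by case: m => [|m] //=; rewrite eqxx.
case: m => [|m] //= Hit Hkm.
case: eqP => // _; congr (_ + _); apply: IH => //.
by rewrite -iterSr.
Qed.

Lemma depth_par (N : finType) (T : host_tree N) b :
  b != ht_root T -> depth T b = ht_w T b + depth T (ht_par T b).
Proof.
move=> Hb; rewrite /depth.
have := ht_rooted T b.
have : 0 < #|N| by apply/card_gt0P; exists b.
case: #|N| => [|n] // _ Hit; rewrite [depth_fuel _ n.+1 b]/=.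
rewrite (negbTE Hb); congr (_ + _).
symmetry; apply: fuel_stable => //.
by rewrite -iterSr.
Qed.

Lemma depth_par_lt (N : finType) (T : host_tree N) b :
  b != ht_root T -> depth T (ht_par T b) < depth T b.
Proof.
move=> Hb; rewrite (depth_par Hb) -{1}[depth T (ht_par T b)]add0n ltn_add2r.
exact: ht_w_pos.
Qed.

Lemma iter_root (N : finType) (T : host_tree N) k :
  iter k (ht_par T) (ht_root T) = ht_root T.
Proof. by elim: k => //= k ->; rewrite ht_par_root. Qed.

Lemma depth_iter_le (N : finType) (T : host_tree N) k x :
  depth T (iter k (ht_par T) x) <= depth T x.
Proof.
elim: k x => [|k IH] x //.
rewrite iterSr.
case: (eqVneq x (ht_root T)) => [->|Hx].
  by rewrite ht_par_root iter_root.
apply: leq_trans (IH _) (ltnW (depth_par_lt Hx)).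
Qed.

Lemma depth_iter_lt (N : finType) (T : host_tree N) k x :
  iter k (ht_par T) x != x -> depth T (iter k (ht_par T) x) < depth T x.
Proof.
case: k => [|k]; first by rewrite eqxx.
rewrite iterSr.
case: (eqVneq x (ht_root T)) => [->|Hx].
  by rewrite ht_par_root iter_root eqxx.
move=> _; apply: leq_ltn_trans (depth_iter_le _ _ _) (depth_par_lt Hx).
Qed.

Definition chain (N : finType) (T : host_tree N) (S : {set N}) y x :=
  exists n, iter n (ht_par T) y = x /\ forall i, i <= n -> iter i (ht_par T) y \in S.

Lemma subroot_chain (N : finType) (T : host_tree N) S x y :
  subtree T S -> is_subroot T S x -> y \in S -> chain T S y x.
Proof.
move=> [_ Hc] [xS Hmin] yS.
have := Hc y x yS xS; case/connectP => p.
elim: p y yS => [|z p IH] y yS /=.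
  by move=> _ ->; exists 0; split => // i; rewrite leqn0 => /eqP ->.
case/andP => /and3P [_ zS Hadj] Hp Hl.
have [n [Hn Hin]] := IH z zS Hp Hl.
case/orP: Hadj => /andP [/eqP Hpar Hr].
  exists n.+1; split; first by rewrite iterSr Hpar.
  case=> [|i] //; rewrite ltnS iterSr Hpar; exact: Hin.
case: n Hn Hin => [|n] Hn Hin.
  move: Hn => /= Hzx; exfalso.
  have := Hmin y yS; rewrite -Hzx -Hpar leqNgt depth_par_lt //.
exists n; split; first by rewrite -Hn iterSr Hpar.
move=> i Hi; rewrite -Hpar -iterSr; apply: Hin; done.
Qed.

Lemma exists_subroot (N : finType) (T : host_tree N) S :
  subtree T S -> exists x, is_subroot T S x.
Proof.
case=> /set0Pn [x0 Hx0] _.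
case: (arg_minnP (depth T) Hx0) => x xS Hm.
by exists x; split.
Qed.

Lemma subroot_depth (N : finType) (T : host_tree N) S x y :
  is_subroot T S x -> is_subroot T S y -> depth T x = depth T y.
Proof.
move=> [xS Hx] [yS Hy]; apply/eqP; rewrite eqn_leq Hx // Hy //.
Qed.

Lemma root_in_nbr (V N : finType) (e : rel V) (T : host_tree N) (R : V -> {set N}) v rv u :
  tree_rep e T R -> maximizes_root_depth T R v -> is_subroot T (R v) rv ->
  u \in cnbhd e v -> rv \in R u.
Proof.
move=> [Hsub He] Hmax Hrv; rewrite inE.
case: (eqVneq u v) => [-> _|Huv /= Hevu]; first by case: Hrv.
have Hvu : v != u by rewrite eq_sym.
rewrite (He _ _ Hvu) in Hevu.
case/set0Pn: Hevu => x; rewrite inE => /andP [xv xu].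
have [ru Hru] := exists_subroot (Hsub u).
have [n1 [H1 _]] := subroot_chain (Hsub v) Hrv xv.
have [n2 [H2 H2in]] := subroot_chain (Hsub u) Hru xu.
case: (leqP n1 n2) => Hn.
  by rewrite -H1; apply: H2in.
have E : rv = iter (n1 - n2) (ht_par T) ru.
  by rewrite -H1 -H2 -iterD subnK // ltnW.
case: (eqVneq rv ru) => [->|Hne]; first by case: Hru.
have Hlt : depth T rv < depth T ru by rewrite E; apply: depth_iter_lt; rewrite -E.
have := Hmax u ru rv Hru Hrv; by rewrite leqNgt Hlt.
Qed.

Lemma nest (V N : finType) (e : rel V) (T : host_tree N) (R : V -> {set N}) v rv u w :
  tree_rep e T R -> maximizes_root_depth T R v -> is_subroot T (R v) rv ->
  u \in cnbhd e v -> w \in cnbhd e v -> overshadows T (R u) (R w) ->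
  cnbhd e w \subset cnbhd e u.
Proof.
move=> Hrep Hmax Hrv Hu Hw Hov.
have rvu := root_in_nbr Hrep Hmax Hrv Hu.
have rvw := root_in_nbr Hrep Hmax Hrv Hw.
case: Hrep => [Hsub He].
apply/subsetP => z; rewrite !inE.
case: (eqVneq z u) => [//|Hzu] /=.
have Huz : u != z by rewrite eq_sym.
rewrite (He _ _ Huz).
case: (eqVneq z w) => [->|Hzw] /=.
  by move=> _; apply/set0Pn; exists rv; rewrite inE rvu rvw.
have Hwz : w != z by rewrite eq_sym.
rewrite (He _ _ Hwz) => /set0Pn [y]; rewrite inE => /andP [yw yz].
have [rw Hrw] := exists_subroot (Hsub w).
have [rz Hrz] := exists_subroot (Hsub z).
have rwu : rw \in R u.
  apply/negPn/negP => Hn.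
  have H1 : rw \in R w :\: R u by rewrite inE Hn (proj1 Hrw).
  have H2 : rv \in R w :&: R u by rewrite inE rvu rvw.
  have := Hov rw rv H1 H2.
  by rewrite ltnNge (proj2 Hrw rv rvw).
have [m [Hm Hmin]] := subroot_chain (Hsub w) Hrw yw.
have [a [Ha Hain]] := subroot_chain (Hsub z) Hrz yz.
apply/set0Pn.
case: (leqP m a) => Hma.
  exists rw; rewrite inE rwu /=.
  rewrite -Hm; exact: Hain.
exists rz; rewrite inE (proj1 Hrz) andbT.
apply/negPn/negP => Hn.
have rzw : rz \in R w by rewrite -Ha; apply: Hmin; exact: ltnW.
have H1 : rz \in R w :\: R u by rewrite inE Hn rzw.
have H2 : rv \in R w :&: R u by rewrite inE rvu rvw.
have := Hov rz rv H1 H2.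
have := Hmax z rz rv Hrz Hrv.
by rewrite ltnNge => ->.
Qed.

Theorem lemma2 (V N : finType) (e : rel V) (T : host_tree N) (R : V -> {set N}) :
  simple_graph e -> 0 < #|V| ->
  tree_rep e T R -> compatible T R ->
  (exists v : V, simple_vertex e v) /\
  (forall v : V, maximizes_root_depth T R v -> simple_vertex e v).
Proof.
move=> _ HV Hrep Hcomp.
have part2 : forall v : V, maximizes_root_depth T R v -> simple_vertex e v.
  move=> v Hmax.
  have [rv Hrv] := exists_subroot (proj1 Hrep v).
  pose le := fun a b => cnbhd e a \subset cnbhd e b.
  exists (sort le (enum (cnbhd e v))); split; first by rewrite perm_sort.
  apply: (sort_sorted_in (P := [in cnbhd e v])); last first.
    by apply/allP => x; rewrite mem_enum.
  move=> a b Ha Hb; rewrite /le.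
  case: (Hcomp a b) => H.
    by rewrite (nest Hrep Hmax Hrv Ha Hb H) orbT.
  by rewrite (nest Hrep Hmax Hrv Hb Ha H).
split=> //.
case/card_gt0P: HV => v0 _.
pose P u x := (x \in R u) && [forall y, (y \in R u) ==> (depth T x <= depth T y)].
have Pex u : exists x, P u x.
  have [x [xS Hx]] := exists_subroot (proj1 Hrep u).
  exists x; rewrite /P xS /=; apply/forallP => y; apply/implyP; exact: Hx.
pose g u := xchoose (Pex u).
have gP u : is_subroot T (R u) (g u).
  have /andP [H1 /forallP H2] := xchooseP (Pex u).
  split=> // y yS; exact: (implyP (H2 y) yS).
case: (arg_maxnP (fun u => depth T (g u)) (isT : predT v0)) => v _ Hv.
exists v; apply: part2 => u x y Hx Hy.
rewrite (subroot_depth Hx (gP u)) (subroot_depth Hy (gP v)); exact: Hv.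
Qed.
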